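(* Let $s_1,s_2$ be prime powers and for $j=1,2$ let $D_j$ be a difference matrix $D(b_j,c_j,s_j)$ over the additive group of $\mathrm{GF}(s_j)$. Let $c_0$ be an integer with $1\le c_0\le\min(c_1,c_2)$, and partition $D_j=[D_{j0},D_{j1}]$ where $D_{j0}$ consists of the first $c_0$ columns. Write $\alpha_{i,k}$ for the $(i,k)$ entry of $D_1$ and $\beta_{j,k}$ for the $(j,k)$ entry of $D_2$. Let $D_0$ be the $b_1b_2\times c_0$ matrix with entries in $\mathrm{GF}(s_1)\times\mathrm{GF}(s_2)$ whose entry in row $(i-1)b_2+j$ and column $k$ is $(\alpha_{i,k},\beta_{j,k})$, for $1\le i\le b_1$, $1\le j\le b_2$, $1\le k\le c_0$. Let $D_{11}^*$ be the $b_1b_2\times(c_1-c_0)$ matrix whose row $(i-1)b_2+j$ is the $i$th row of $D_{11}$, and $D_{21}^*$ the $b_1b_2\times(c_2-c_0)$ matrix whose row $(i-1)b_2+j$ is the $j$th row of $D_{21}$. Then: (i) $D_0$ is a difference matrix $D(b_1b_2,c_0,s_1s_2)$ over the group $\mathrm{GF}(s_1)\times\mathrm{GF}(s_2)$ (addition componentwise); (ii) for $j=1,2$, $D_{j1}^*$ is a difference matrix $D(b_1b_2,c_j-c_0,s_j)$; (iii) for $j=1,2$, $[\sigma_j(D_0),D_{j1}^*]$ is a difference matrix $D(b_1b_2,c_j,s_j)$.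
   Context: A difference matrix $D(b,c,g)$ over an abelian group of order $g$ is a $b\times c$ array with entries in the group such that for any two distinct columns their entrywise difference contains every group element equally often. For a matrix whose entries are pairs, $\sigma_j$ denotes taking the $j$th component of every entry. *)

(* Defs.v *)
From HB Require Import structures.
From mathcomp Require Import all_boot all_order all_algebra all_field.
Set Implicit Arguments. Unset Strict Implicit. Unset Printing Implicit Defensive.
Import GRing.Theory.
Local Open Scope ring_scope.

(* The direct product of two finite abelian groups (componentwise addition)
   as a finZmodType (joins the existing pair zmodType and finType instances). *)
HB.instance Definition _ (U V : finZmodType) := GRing.Zmodule.on (U * V)%type.

(* A difference matrix D(b,c,g) over a finite abelian group G (g = #|G|):
   a b x c array such that for any two distinct columns k, l, the entrywise
   difference column D(.,k) - D(.,l) contains every group element equally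
   often. *)
Definition is_diff_matrix (G : finZmodType) (b c : nat) (D : 'M[G]_(b, c)) :=
  forall k l : 'I_c, k != l ->
  forall x y : G,
    #|[set i : 'I_b | D i k - D i l == x]| = #|[set i : 'I_b | D i k - D i l == y]|.

(* Row r = i*b2 + j (0-based) of a b1*b2-rowed matrix corresponds to (i, j). *)
Lemma rdiv_lt (b1 b2 : nat) (r : 'I_(b1 * b2)) : (r %/ b2 < b1)%N.
Proof.
case: r => r /=; case: b2 => [|b2]; first by rewrite muln0.
by move=> h; rewrite ltn_divLR.
Qed.

Lemma rmod_lt (b1 b2 : nat) (r : 'I_(b1 * b2)) : (r %% b2 < b2)%N.
Proof.
case: r => r /=; case: b2 => [|b2]; first by rewrite muln0.
by move=> _; rewrite ltn_pmod.
Qed.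

Definition rdiv (b1 b2 : nat) (r : 'I_(b1 * b2)) : 'I_b1 := Ordinal (rdiv_lt r).
Definition rmod (b1 b2 : nat) (r : 'I_(b1 * b2)) : 'I_b2 := Ordinal (rmod_lt r).

Definition firstcols (T : Type) (b c c0 : nat) (h : (c0 <= c)%N) (D : 'M[T]_(b, c))
  : 'M[T]_(b, c0) := lsubmx (castmx (erefl b, esym (subnKC h)) D).
Definition lastcols (T : Type) (b c c0 : nat) (h : (c0 <= c)%N) (D : 'M[T]_(b, c))
  : 'M[T]_(b, c - c0) := rsubmx (castmx (erefl b, esym (subnKC h)) D).

Definition D0mx (T1 T2 : Type) (b1 b2 c1 c2 c0 : nat)
  (h1 : (c0 <= c1)%N) (h2 : (c0 <= c2)%N)
  (D1 : 'M[T1]_(b1, c1)) (D2 : 'M[T2]_(b2, c2)) : 'M[T1 * T2]_(b1 * b2, c0) :=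
  \matrix_(r, k) (firstcols h1 D1 (rdiv r) k, firstcols h2 D2 (rmod r) k).

Definition D1star (T : Type) (b1 b2 c1 c0 : nat) (h1 : (c0 <= c1)%N)
  (D1 : 'M[T]_(b1, c1)) : 'M[T]_(b1 * b2, c1 - c0) :=
  \matrix_(r, k) lastcols h1 D1 (rdiv r) k.
Definition D2star (T : Type) (b1 b2 c2 c0 : nat) (h2 : (c0 <= c2)%N)
  (D2 : 'M[T]_(b2, c2)) : 'M[T]_(b1 * b2, c2 - c0) :=
  \matrix_(r, k) lastcols h2 D2 (rmod r) k.

(* Main.v *)
Require Import Defs.
From HB Require Import structures.
From mathcomp Require Import all_boot all_order all_algebra all_field zify.
Import GRing.Theory.
Local Open Scope ring_scope.

Section S.
Variables b1 b2 : nat.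

Lemma g_lt (x : 'I_b1 * 'I_b2) : (x.1 * b2 + x.2 < b1 * b2)%N.
Proof. case: x => [[i hi] [j hj]] /=. nia. Qed.
Definition gidx (x : 'I_b1 * 'I_b2) : 'I_(b1 * b2) := Ordinal (g_lt x).

Lemma gidx_div x : @rdiv b1 b2 (gidx x) = x.1.
Proof.
case: x => [[i hi] [j hj]]; apply: val_inj => /=.
by rewrite divnMDl ?(leq_ltn_trans _ hj) // divn_small // addn0.
Qed.
Lemma gidx_mod x : @rmod b1 b2 (gidx x) = x.2.
Proof.
case: x => [[i hi] [j hj]]; apply: val_inj => /=.
by rewrite modnMDl modn_small.
Qed.
Lemma gidx_inj : injective gidx.
Proof.
move=> x y e; have h1 := gidx_div x; have h2 := gidx_mod x.
rewrite e gidx_div gidx_mod in h1 h2.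
by case: x y h1 h2 {e} => ? ? [? ?] /= -> ->.
Qed.
Lemma gidx_surj r : gidx (@rdiv b1 b2 r, @rmod b1 b2 r) = r.
Proof. apply: val_inj => /=; by rewrite -divn_eq. Qed.

Lemma card_rsplit (P : pred 'I_b1) (Q : pred 'I_b2) :
  #|[set r : 'I_(b1*b2) | P (@rdiv b1 b2 r) && Q (@rmod b1 b2 r)]| = (#|[set i | P i]| * #|[set j | Q j]|)%N.
Proof.
have -> : [set r : 'I_(b1*b2) | P (@rdiv b1 b2 r) && Q (@rmod b1 b2 r)] = gidx @: setX [set i | P i] [set j | Q j].
  apply/setP => r; rewrite inE; apply/idP/imsetP.
    by move=> H; exists (@rdiv b1 b2 r, @rmod b1 b2 r); rewrite ?gidx_surj // !inE.
  by case=> x; rewrite !inE => /andP[Hp Hq] ->; rewrite gidx_div gidx_mod Hp.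
by rewrite card_imset ?cardsX //; apply: gidx_inj.
Qed.

Lemma lift_div (G : finZmodType) c (D : 'M[G]_(b1,c)) (M : 'M[G]_(b1*b2,c)) :
  (forall r k, M r k = D (@rdiv b1 b2 r) k) -> is_diff_matrix D -> is_diff_matrix M.
Proof.
move=> hM hD k l kl x y.
have E z : #|[set r | M r k - M r l == z]| = muln #|[set i | D i k - D i l == z]| #|[set j : 'I_b2 | true]|.
  rewrite -(card_rsplit (fun i => D i k - D i l == z) (fun _ => true)); apply: eq_card => r; by rewrite !inE !hM andbT.
by rewrite !E (hD k l kl x y).
Qed.

Lemma lift_mod (G : finZmodType) c (D : 'M[G]_(b2,c)) (M : 'M[G]_(b1*b2,c)) :
  (forall r k, M r k = D (@rmod b1 b2 r) k) -> is_diff_matrix D -> is_diff_matrix M.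
Proof.
move=> hM hD k l kl x y.
have E z : #|[set r | M r k - M r l == z]| = muln #|[set i : 'I_b1 | true]| #|[set i | D i k - D i l == z]|.
  rewrite -(card_rsplit (fun _ => true) (fun i => D i k - D i l == z)); apply: eq_card => r; by rewrite !inE !hM.
by rewrite !E (hD k l kl x y).
Qed.

Lemma lift_prod (G1 G2 : finZmodType) c (A : 'M[G1]_(b1,c)) (B : 'M[G2]_(b2,c)) (M : 'M[(G1 * G2)%type]_(b1*b2,c)) :
  (forall r k, M r k = (A (@rdiv b1 b2 r) k, B (@rmod b1 b2 r) k)) -> is_diff_matrix A -> is_diff_matrix B -> is_diff_matrix M.
Proof.
move=> hM hA hB k l kl [x1 x2] [y1 y2].
have E z1 z2 : #|[set r | M r k - M r l == (z1, z2)]| = muln #|[set i | A i k - A i l == z1]| #|[set j | B j k - B j l == z2]|.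
  rewrite -(card_rsplit (fun i => A i k - A i l == z1) (fun j => B j k - B j l == z2)); apply: eq_card => r; by rewrite !inE !hM.
by rewrite !E (hA k l kl x1 y1) (hB k l kl x2 y2).
Qed.
End S.

Lemma firstcolsE (T : Type) b c c0 (h : (c0 <= c)%N) (D : 'M[T]_(b, c)) i k :
  firstcols h D i k = D i (widen_ord h k).
Proof. by rewrite /firstcols mxE castmxE /=; congr (D _ _); apply: val_inj. Qed.

Lemma lastcols_lt c c0 (k : 'I_(c - c0)) : (c0 <= c)%N -> (c0 + k < c)%N.
Proof. case: k => k hk /= h; lia. Qed.

Lemma lastcolsE (T : Type) b c c0 (h : (c0 <= c)%N) (D : 'M[T]_(b, c)) i k :
  lastcols h D i k = D i (Ordinal (lastcols_lt _ _ k h)).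
Proof. by rewrite /lastcols mxE castmxE /=; congr (D _ _); apply: val_inj. Qed.

Lemma combE (T : Type) B b c c0 (h : (c0 <= c)%N) (D : 'M[T]_(b, c)) (f : 'I_B -> 'I_b)
  (M0 : 'M[T]_(B, c0)) (M1 : 'M[T]_(B, c - c0)) :
  (forall r k, M0 r k = D (f r) (widen_ord h k)) ->
  (forall r k, M1 r k = D (f r) (Ordinal (lastcols_lt _ _ k h))) ->
  forall r k, castmx (erefl B, subnKC h) (row_mx M0 M1) r k = D (f r) k.
Proof.
move=> h0 h1 r k; rewrite castmxE /= /row_mx mxE.
case: splitP => j hj; rewrite ?h0 ?h1; (congr (D _ _); [by congr f; apply: val_inj | apply: val_inj; by move: hj => /= ->]).
Qed.

Arguments firstcolsE {T b c c0}.
Arguments lastcolsE {T b c c0}.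

Theorem lemma7 (F1 F2 : finFieldType) (b1 b2 c1 c2 c0 : nat)
  (D1 : 'M[F1]_(b1, c1)) (D2 : 'M[F2]_(b2, c2))
  (hD1 : is_diff_matrix D1) (hD2 : is_diff_matrix D2)
  (hc0 : (1 <= c0)%N) (h1 : (c0 <= c1)%N) (h2 : (c0 <= c2)%N) :
  let D0 := D0mx h1 h2 D1 D2 in
  let D11s := D1star b2 h1 D1 in
  let D21s := D2star b1 h2 D2 in
  [/\ is_diff_matrix D0,
      is_diff_matrix D11s /\ is_diff_matrix D21s &
      is_diff_matrix (castmx (erefl (b1 * b2)%N, subnKC h1) (row_mx (map_mx fst D0) D11s))
      /\ is_diff_matrix (castmx (erefl (b1 * b2)%N, subnKC h2) (row_mx (map_mx snd D0) D21s))].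
Proof.
move=> D0 D11s D21s.
have colsub (T : finZmodType) b c c' (D : 'M[T]_(b, c)) (M : 'M[T]_(b, c')) (f : 'I_c' -> 'I_c) :
    injective f -> (forall i k, M i k = D i (f k)) -> is_diff_matrix D -> is_diff_matrix M.
  move=> fi hM hD k l kl x y.
  have E z : [set i | M i k - M i l == z] = [set i | D i (f k) - D i (f l) == z].
    by apply/setP => i; rewrite !inE !hM.
  by rewrite !E; apply: hD; rewrite (inj_eq fi).
have wi c (h : (c0 <= c)%N) : injective (widen_ord h).
  by move=> a b /(congr1 val) /= /val_inj.
have li c (h : (c0 <= c)%N) : injective (fun k : 'I_(c - c0) => Ordinal (lastcols_lt _ _ k h)).
  move=> a b /(congr1 val) /= /eqP; rewrite eqn_add2l => /eqP; exact: val_inj.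
have fc1 := colsub _ _ _ _ D1 (firstcols h1 D1) _ (wi _ h1) (firstcolsE h1 D1) hD1.
have fc2 := colsub _ _ _ _ D2 (firstcols h2 D2) _ (wi _ h2) (firstcolsE h2 D2) hD2.
have lc1 := colsub _ _ _ _ D1 (lastcols h1 D1) _ (li _ h1) (lastcolsE h1 D1) hD1.
have lc2 := colsub _ _ _ _ D2 (lastcols h2 D2) _ (li _ h2) (lastcolsE h2 D2) hD2.
split.
- by apply: (lift_prod _ _ _ _ _ _ _ _ _ fc1 fc2) => r k; rewrite mxE.
- split.
    by apply: (lift_div _ _ _ _ _ _ _ lc1) => r k; rewrite mxE.
  by apply: (lift_mod _ _ _ _ _ _ _ lc2) => r k; rewrite mxE.
- split.
    apply: (lift_div _ _ _ _ D1 _ _ hD1); apply: combE => r k; rewrite !mxE /=.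
      by rewrite castmxE; congr (D1 _ _); apply: val_inj.
    by rewrite castmxE; congr (D1 _ _); apply: val_inj.
  apply: (lift_mod _ _ _ _ D2 _ _ hD2); apply: combE => r k; rewrite !mxE /=.
    by rewrite castmxE; congr (D2 _ _); apply: val_inj.
  by rewrite castmxE; congr (D2 _ _); apply: val_inj.
Qed.
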